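(* For every $n\ge 8$, the Pachner graph $\mathcal{S}_n$ of $n$-vertex stacked $2$-spheres is disconnected.
   Context: A triangulated $2$-sphere is a finite simplicial complex whose geometric realization is homeomorphic to the $2$-sphere. Edge flip $ab\mapsto cd$: if $abc,abd$ are triangles and $cd$ is not an edge, replace $abc,abd$ by $acd,bcd$. A stacked $3$-ball is a simplicial complex obtained from a single tetrahedron by repeatedly gluing a new tetrahedron along exactly one boundary triangle, introducing one new vertex each time. A stacked $2$-sphere is a triangulated $2$-sphere isomorphic to the boundary of a stacked $3$-ball. $\mathcal{S}_n$ is the graph whose nodes are the isomorphism classes of $n$-vertex stacked $2$-spheres, two nodes being adjacent iff a representative of one can be transformed into a representative of the other by a single edge flip. *)

(* Defs.v *)
From Stdlib Require Import Relations.
From HB Require Import structures.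
From mathcomp Require Import all_boot all_fingroup.
Set Implicit Arguments. Unset Strict Implicit. Unset Printing Implicit Defensive.

(* A pure simplicial complex is represented by its set of facets.
   Tetrahedra are 4-element vertex sets, triangles 3-element vertex sets. *)

Section Complexes.
Variable T : finType.

Definition boundary (B : {set {set T}}) : {set {set T}} :=
  [set s : {set T} | (#|s| == 3) && (#|[set t in B | s \subset t]| == 1)].

Definition vertices (K : {set {set T}}) : {set T} := \bigcup_(t in K) t.

Inductive stacked_ball : {set {set T}} -> Prop :=
| sb_base (t : {set T}) : #|t| = 4 -> stacked_ball [set t]
| sb_glue (B : {set {set T}}) (s : {set T}) (v : T) :
    stacked_ball B -> s \in boundary B -> v \notin vertices B ->
    stacked_ball (v |: s |: B).

Definition is_edge (S : {set {set T}}) (e : {set T}) :=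
  exists2 t, t \in S & e \subset t.

Definition flip (S S' : {set {set T}}) : Prop :=
  exists a b c d : T,
    [/\ uniq [:: a; b; c; d],
        [set a; b; c] \in S, [set a; b; d] \in S,
        ~ is_edge S [set c; d] &
        S' = [set a; c; d] |: ([set b; c; d] |: ((S :\ [set a; b; c]) :\ [set a; b; d]))].
End Complexes.

(* n-vertex stacked 2-spheres on the vertex set 'I_n: boundaries of stacked
   3-balls using all n vertices (every n-vertex stacked 2-sphere is isomorphic
   to one of these) *)
Definition stacked_sphere (n : nat) (S : {set {set 'I_n}}) : Prop :=
  exists2 B, stacked_ball B & (vertices B = setT /\ S = boundary B).

Definition iso_cx (n : nat) (S S' : {set {set 'I_n}}) : Prop :=
  exists f : {perm 'I_n}, S' = [set [set f x | x in t] | t : {set 'I_n} in S].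

(* adjacency in S_n, lifted to representatives *)
Definition Sn_adj (n : nat) (S S' : {set {set 'I_n}}) : Prop :=
  [/\ stacked_sphere S, stacked_sphere S' &
      exists X X', [/\ iso_cx S X, iso_cx S' X' & flip X X']].

Definition Sn_connected (n : nat) (S S' : {set {set 'I_n}}) : Prop :=
  clos_refl_trans _ (@Sn_adj n) S S'.

(* Main.v *)
Require Import Defs.
From Stdlib Require Import Relations.
From HB Require Import structures.
From mathcomp Require Import all_boot all_fingroup.
From Stdlib Require Import Classical.
From mathcomp Require Import zify.
Set Implicit Arguments. Unset Strict Implicit. Unset Printing Implicit Defensive.

Ltac neqs := repeat match goal with
  | H : is_true (?a != ?b) |- context [?a == ?b] => rewrite (negbTE H)
  | H : is_true (?a != ?b) |- context [?b == ?a] => rewrite (eq_sym b a) (negbTE H)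
  end.
Ltac selfneq := match goal with H : is_true (?a != ?a) |- _ => by rewrite eqxx in H end.
Ltac dec x := repeat (match goal with |- context [x == ?c] =>
  let E := fresh "E" in case: (eqVneq x c) => [E|?]; [subst x |] end;
  neqs; rewrite ?eqxx /=; try done; try selfneq).
Ltac brute := repeat (case/orP || (move/eqP => ?; subst)); neqs;
  rewrite ?eqxx ?orbT ?orbF //=; try selfneq.

Section Gen.
Variable T : finType.
Implicit Types (B S X : {set {set T}}) (s t f Q : {set T}) (v x y : T).

Definition adj S x y := exists2 t, t \in S & (x \in t) && (y \in t).
Definition clique S Q := forall u w, u \in Q -> w \in Q -> adj S u w.

Lemma vertP B x : reflect (exists2 t, t \in B & x \in t) (x \in vertices B).
Proof. exact: bigcupP. Qed.

Lemma bd_sub B f : f \in boundary B -> exists2 t, t \in B & f \subset t.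
Proof.
rewrite inE => /andP[_ /eqP H].
have : #|[set t in B | f \subset t]| != 0 by rewrite H.
rewrite cards_eq0 => /set0Pn[t]; rewrite inE => /andP[??]; by exists t.
Qed.

Lemma bd_card B f : f \in boundary B -> #|f| = 3.
Proof. by rewrite inE => /andP[/eqP]. Qed.

Lemma bd_vert B f x : f \in boundary B -> x \in f -> x \in vertices B.
Proof.
move=> /bd_sub[t tB ft] xf; apply/vertP; exists t => //; exact: (subsetP ft).
Qed.

Lemma vert_glue B s v : vertices ((v |: s) |: B) = (v |: s) :|: vertices B.
Proof.
apply/setP=> x; rewrite inE; apply/vertP/orP.
- move=> [t] /setU1P[->|tB] xt; first by left.
  by right; apply/vertP; exists t.
- case=> [xt|/vertP[t tB xt]]; first by exists (v |: s); rewrite ?setU11.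
  by exists t; rewrite // inE tB orbT.
Qed.

Lemma card3 s : #|s| = 3 -> exists p q r,
  [/\ p != q, p != r, q != r & s = [set p; q; r]].
Proof.
move=> H.
have : s != set0 by rewrite -card_gt0 H.
case/set0Pn=> p ps.
have : #|s :\ p| == 2 by move: H; rewrite (cardsD1 p s) ps add1n => -[->].
case/cards2P=> q [r [qr E]].
have : q \in s :\ p by rewrite E !inE eqxx.
have : r \in s :\ p by rewrite E !inE eqxx orbT.
rewrite !inE => /andP[rp _] /andP[qp _].
exists p, q, r; split => //; first by rewrite eq_sym.
  by rewrite eq_sym.
apply/setP=> x; rewrite !inE.
case: (eqVneq x p) => [->|xp] //=.
have : (x \in s :\ p) = (x \in [set q; r]) by rewrite E.
by rewrite !inE xp.
Qed.


Lemma glue_facts B s v : s \in boundary B -> v \notin vertices B ->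
  [/\ v \notin s, v |: s \notin B & #|s| = 3].
Proof.
move=> sB vB; split; last exact: bd_card sB.
- by apply: contra vB; exact: bd_vert sB.
- apply: contra vB => H; apply/vertP; exists (v |: s) => //; exact: setU11.
Qed.

Lemma bd_glue B s v : s \in boundary B -> v \notin vertices B -> forall f,
  (f \in boundary ((v |: s) |: B)) =
  ((#|f| == 3) && (v \in f) && (f \subset v |: s)) || ((f \in boundary B) && (f != s)).
Proof.
move=> sB vB f; have [vs tB cs] := glue_facts sB vB.
have E : [set t in (v |: s) |: B | f \subset t] =
  if f \subset v |: s then (v |: s) |: [set t in B | f \subset t]
  else [set t in B | f \subset t].
  apply/setP => t; case: ifP => Hf; rewrite !inE;
  case: (eqVneq t (v |: s)) => [->|//]; by rewrite ?Hf ?(negbTE tB).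
rewrite {1}/boundary inE E.
case: ifP => Hf.
- case vf: (v \in f).
  + have E0 : [set t in B | f \subset t] = set0.
      apply/setP => t; rewrite !inE; apply/negP => /andP[tB' ft].
      move: vB; rewrite -(negbK (v \in _)) => /negP; apply; apply/negPn.
      by apply/vertP; exists t => //; exact: (subsetP ft).
    rewrite E0 setU0 cards1 andbT /=.
    case fB: (f \in boundary B) => //=; last by rewrite orbF.
    by move: vB; rewrite (bd_vert fB vf).
  + have fs : f \subset s.
      apply/subsetP => x xf; move/subsetP: Hf => /(_ x xf); rewrite !inE.
      by case/orP => // /eqP xv; move: vf; rewrite -xv xf.
    rewrite andbF /=.
    case: (eqVneq f s) => [fs'|nfs]; last first.
      rewrite andbT; case cf: (#|f| == 3); last first.
        by rewrite /= /boundary inE cf.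
      by move: nfs; rewrite eqEcard fs cs (eqP cf) leqnn.
    subst f; rewrite andbF cs /=.
    move: sB; rewrite /boundary inE => /andP[_ /eqP H1].
    by rewrite cardsU1 H1 inE (negbTE tB).
- rewrite andbF /= /boundary inE.
  case: (eqVneq f s) => [fs|]; last by rewrite andbT.
  by move: Hf; rewrite fs subsetUr.
Qed.

Lemma card_set3 (U : finType) (a b c : U) : a != b -> a != c -> b != c -> #|[set a; b; c]| = 3.
Proof.
move=> ab ac bc; rewrite -setUA cardsU1 cards2 !inE.
by rewrite (negbTE ab) (negbTE ac) (negbTE bc).
Qed.

Lemma card_set3_le (U : finType) (a b c : U) : #|[set a; b; c]| <= 3.
Proof.
rewrite -setUA cardsU1 cards2.
by case: (_ \notin _); case: (_ != _).
Qed.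

Lemma sub_eq_card (A C : {set T}) : A \subset C -> #|C| <= #|A| -> A = C.
Proof. by move=> H1 H2; apply/eqP; rewrite eqEcard H1. Qed.

Lemma bd_glue3 B s v p q r : s \in boundary B -> v \notin vertices B ->
  p != q -> p != r -> q != r -> s = [set p; q; r] -> forall f,
  (f \in boundary ((v |: s) |: B)) =
  [|| f == [set v; p; q], f == [set v; p; r], f == [set v; q; r] |
      (f \in boundary B) && (f != s)].
Proof.
move=> sB vB pq pr qr Es f; have [vs tB cs] := glue_facts sB vB.
rewrite bd_glue //; rewrite orbA orbA; congr (_ || _).
have vp : v != p by apply: contraNneq vs => ->; rewrite Es !inE eqxx.
have vq : v != q by apply: contraNneq vs => ->; rewrite Es !inE eqxx ?orbT.
have vr : v != r by apply: contraNneq vs => ->; rewrite Es !inE eqxx ?orbT.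
subst s.
apply/idP/idP.
- case/andP => /andP[/eqP cf vf] fsub.
  have fsub' : forall x, x \in f -> [|| x == v, x == p, x == q | x == r].
    by move=> x /(subsetP fsub); rewrite !inE; brute.
  case pf: (p \in f); case qf: (q \in f).
  + apply/orP; left; apply/orP; left; apply/eqP; apply/esym/sub_eq_card.
      by apply/subsetP => x; rewrite !inE; brute.
    by rewrite cf card_set3.
  + apply/orP; left; apply/orP; right; apply/eqP; apply/sub_eq_card; last first.
      by rewrite cf card_set3.
    apply/subsetP => x xf; have := fsub' x xf; rewrite !inE.
    by brute; rewrite qf in xf.
  + apply/orP; right; apply/eqP; apply/sub_eq_card; last first.
      by rewrite cf card_set3.
    apply/subsetP => x xf; have := fsub' x xf; rewrite !inE.
    by brute; rewrite pf in xf.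
  + apply/orP; right; apply/eqP; apply/sub_eq_card; last first.
      by rewrite cf card_set3.
    apply/subsetP => x xf; have := fsub' x xf; rewrite !inE.
    by brute; rewrite ?pf ?qf in xf.
- case/orP => [/orP[]|] /eqP->; rewrite card_set3 //;
  (apply/andP; split; [apply/andP; split; [by [] | by rewrite !inE eqxx]|]);
  by apply/subsetP => x; rewrite !inE; brute.
Qed.

Lemma adj_sym S x y : adj S x y -> adj S y x.
Proof. by case=> t tS /andP[? ?]; exists t => //; apply/andP. Qed.

Lemma adj_bd_vert B x y : adj (boundary B) x y -> x \in vertices B.
Proof. by case=> t tB /andP[xt _]; exact: bd_vert tB xt. Qed.

Definition K5free S := forall Q, 4 < #|Q| -> clique S Q -> False.
Definition C4free S := forall w x y z, adj S w x -> adj S x y -> adj S y z ->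
  adj S z w -> ~ adj S w y -> ~ adj S x z -> False.
Definition E2 S := forall x y, x != y ->
  #|[set f in S | (x \in f) && (y \in f)]| <= 2.
Definition K4in B := forall Q, #|Q| = 4 -> clique (boundary B) Q -> Q \in B.

Lemma sub_del (f A : {set T}) : f \subset A -> #|A| = #|f|.+1 -> exists2 z, z \in A & f = A :\ z.
Proof.
move=> fA cA.
have : #|A :\: f| == 1 by rewrite cardsD (setIidPr fA) cA subSnn.
case/cards1P => z Ez.
have zD : z \in A :\: f by rewrite Ez set11.
have zA : z \in A by move: zD; rewrite inE => /andP[].
exists z => //; apply/setP => x; rewrite !inE.
case: (eqVneq x z) => [->|xz] /=.
  by move: zD; rewrite inE => /andP[/negbTE].
case xA: (x \in A); last by apply/negbTE; apply: contraFN xA => /(subsetP fA).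
have : (x \in A :\: f) = (x \in [set z]) by rewrite Ez.
by rewrite !inE xA (negbTE xz) andbT => /negbFE.
Qed.

Section Base.
Variable t : {set T}.
Hypothesis ct : #|t| = 4.

Lemma bd_base f : (f \in boundary [set t]) = (#|f| == 3) && (f \subset t).
Proof.
rewrite /boundary inE; case ft: (f \subset t).
- have -> : [set u in [set t] | f \subset u] = [set t].
    by apply/setP=> u; rewrite !inE; case: eqP => // ->; rewrite ft.
  by rewrite cards1 !andbT.
- have -> : [set u in [set t] | f \subset u] = set0.
    by apply/setP=> u; rewrite !inE; case: eqP => // ->; rewrite ft.
  by rewrite cards0 !andbF.
Qed.

Lemma adj_base x y : adj (boundary [set t]) x y <-> x \in t /\ y \in t.
Proof.
split.
- case=> f; rewrite bd_base => /andP[_ ft] /andP[hx hy].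
  by split; apply: (subsetP ft).
- case=> hx hy.
  have : 0 < #|t :\: [set x; y]|.
    rewrite cardsD ct; have : #|t :&: [set x; y]| <= 2.
      apply: leq_trans (subset_leq_card (subsetIr t [set x; y])) _.
      by rewrite cards2 ltnS leq_b1.
    by case: #|_| => [|[|[|]]].
  rewrite card_gt0 => /set0Pn[z]; rewrite !inE negb_or => /andP[/andP[zx zy] zt].
  exists (t :\ z); last by rewrite !inE hx hy eq_sym zx eq_sym zy.
  rewrite bd_base subsetDl andbT; move: ct; rewrite (cardsD1 z) zt add1n.
  by case=> ->.
Qed.

Lemma base_K5 : K5free (boundary [set t]).
Proof.
move=> Q cQ HQ; have : Q \subset t.
  by apply/subsetP => u uQ; have [] := (adj_base u u).1 (HQ u u uQ uQ).
by move/subset_leq_card; rewrite ct leqNgt cQ.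
Qed.

Lemma base_C4 : C4free (boundary [set t]).
Proof.
move=> w x y z /adj_base[hw _] /adj_base[_ hy] _ _ []; exact/adj_base.
Qed.

Lemma base_K4 : K4in [set t].
Proof.
move=> Q cQ HQ; have Qt : Q \subset t.
  by apply/subsetP => u uQ; have [] := (adj_base u u).1 (HQ u u uQ uQ).
by rewrite (sub_eq_card Qt) ?ct ?cQ ?set11.
Qed.

Lemma base_E2 : E2 (boundary [set t]).
Proof.
move=> x y xy.
set N := [set f in _ | _].
have [->|] := eqVneq N set0; first by rewrite cards0.
case/set0Pn => f0; rewrite inE bd_base => /andP[/andP[_ f0t] /andP[hx hy]].
have hx' := subsetP f0t x hx; have hy' := subsetP f0t y hy.
have : N \subset [set t :\ z | z in t :\: [set x; y]].
  apply/subsetP => f; rewrite inE bd_base => /andP[/andP[/eqP cf ft] /andP[fx fy]].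
  have [z zt Ef] := sub_del ft (etrans ct (esym (congr1 S cf))).
  apply/imsetP; exists z => //.
  move: fx fy; rewrite Ef !inE zt andbT => /andP[xz _] /andP[yz _].
  by rewrite negb_or eq_sym xz eq_sym yz.
move/subset_leq_card/leq_trans; apply; apply: leq_trans (leq_imset_card _ _) _.
rewrite cardsD ct (setIidPr _); first by rewrite cards2 xy.
by apply/subsetP => u; rewrite !inE => /orP[]/eqP->.
Qed.

End Base.

Section Glue.
Variables (B : {set {set T}}) (s : {set T}) (v : T).
Hypotheses (sB : s \in boundary B) (vB : v \notin vertices B).
Let B' := (v |: s) |: B.

Lemma adj_new x y : x \in v |: s -> y \in v |: s -> adj (boundary B') x y.
Proof.
have [p [q [r [pq pr qr Es]]]] := card3 (bd_card sB).
have HB := bd_glue3 sB vB pq pr qr Es.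
have [vs _ _] := glue_facts sB vB.
move: vs; rewrite Es !inE => vs.
have vp : v != p by apply: contraNneq vs => ->; rewrite eqxx.
have vq : v != q by apply: contraNneq vs => ->; rewrite eqxx ?orbT.
have vr : v != r by apply: contraNneq vs => ->; rewrite eqxx ?orbT.
have F1 : [set v; p; q] \in boundary B' by rewrite HB eqxx.
have F2 : [set v; p; r] \in boundary B' by rewrite HB eqxx ?orbT.
have F3 : [set v; q; r] \in boundary B' by rewrite HB eqxx ?orbT.
move=> /or3P[|/orP[]|] /eqP-> /or3P[|/orP[]|] /eqP->;
first [ exists [set v; p; q]; [done | by rewrite !inE !eqxx ?orbT]
      | exists [set v; p; r]; [done | by rewrite !inE !eqxx ?orbT]
      | exists [set v; q; r]; [done | by rewrite !inE !eqxx ?orbT] ].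
Qed.

Lemma adj_mono x y : adj (boundary B) x y -> adj (boundary B') x y.
Proof.
case=> t tB xyt; have [p [q [r [pq pr qr Es]]]] := card3 (bd_card sB).
case: (eqVneq t s) => [ts|nts].
  subst t; case/andP: xyt => hx hy; apply: adj_new; by rewrite inE ?hx ?hy orbT.
exists t => //; rewrite (bd_glue3 sB vB pq pr qr Es) tB nts /= ?orbT //.
Qed.

Lemma adj_glue x y : adj (boundary B') x y ->
  adj (boundary B) x y \/ (x \in v |: s /\ y \in v |: s).
Proof.
have [p [q [r [pq pr qr Es]]]] := card3 (bd_card sB).
case=> t; rewrite (bd_glue3 sB vB pq pr qr Es) => Ht /andP[hx hy].
move: Ht; case/or4P => [| | |/andP[tB _]]; last by left; exists t => //; apply/andP.
all: move/eqP=> Et; right; move: hx hy; rewrite Et Es !inE; by brute.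
Qed.

Lemma adj_v w : adj (boundary B') v w -> w \in v |: s.
Proof.
case/adj_glue => [/adj_bd_vert|[]//]; by rewrite (negbTE vB).
Qed.

Lemma adj_old x y : x != v -> y != v -> adj (boundary B') x y -> adj (boundary B) x y.
Proof.
move=> xv yv /adj_glue[//|[]]; rewrite !inE (negbTE xv) (negbTE yv) /= => hx hy.
by exists s => //; rewrite hx hy.
Qed.

Lemma glue_card4 : #|v |: s| = 4.
Proof. by have [vs _ cs] := glue_facts sB vB; rewrite cardsU1 vs cs. Qed.

Lemma clique_old Q : v \notin Q -> clique (boundary B') Q -> clique (boundary B) Q.
Proof.
move=> vQ HQ u w uQ wQ; apply: adj_old (HQ u w uQ wQ).
- by apply: contraNneq vQ => <-.
- by apply: contraNneq vQ => <-.
Qed.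

Lemma clique_v Q : v \in Q -> clique (boundary B') Q -> Q \subset v |: s.
Proof. by move=> vQ HQ; apply/subsetP => u uQ; exact: adj_v (HQ v u vQ uQ). Qed.

Lemma glue_K5 : K5free (boundary B) -> K5free (boundary B').
Proof.
move=> H Q cQ HQ; case vQ: (v \in Q).
- by have := subset_leq_card (clique_v vQ HQ); rewrite glue_card4 leqNgt cQ.
- exact: H Q cQ (clique_old (negbT vQ) HQ).
Qed.

Lemma glue_K4 : K4in B -> K4in B'.
Proof.
move=> H Q cQ HQ; case vQ: (v \in Q).
- rewrite (sub_eq_card (clique_v vQ HQ)) ?glue_card4 ?cQ //; exact: setU11.
- by rewrite inE (H Q cQ (clique_old (negbT vQ) HQ)) orbT.
Qed.

Lemma C4_v x z : adj (boundary B') v x -> adj (boundary B') z v ->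
  ~ adj (boundary B') x z -> False.
Proof. by move=> /adj_v hx /adj_sym /adj_v hz []; apply: adj_new. Qed.

Lemma glue_C4 : C4free (boundary B) -> C4free (boundary B').
Proof.
move=> H w x y z a1 a2 a3 a4 n1 n2.
case: (eqVneq w v) => [E|wv]; first by subst w; exact: C4_v a1 a4 n2.
case: (eqVneq x v) => [E|xv].
  by subst x; exact: (C4_v a2 a1 (fun h => n1 (adj_sym h))).
case: (eqVneq y v) => [E|yv]; first by subst y; exact: (C4_v a3 a2 (fun h => n2 (adj_sym h))).
case: (eqVneq z v) => [E|zv]; first by subst z; exact: (C4_v a4 a3 n1).
apply: (H w x y z); try (apply: adj_old; eassumption).
- by move/adj_mono.
- by move/adj_mono.
Qed.

Lemma glue_E2 : E2 (boundary B) -> E2 (boundary B').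
Proof.
move=> H x y xy.
have [p [q [r [pq pr qr Es]]]] := card3 (bd_card sB).
have HB := bd_glue3 sB vB pq pr qr Es.
have [vs _ _] := glue_facts sB vB.
move: (vs); rewrite Es !inE => vs'.
have vp : v != p by apply: contraNneq vs' => ->; rewrite eqxx.
have vq : v != q by apply: contraNneq vs' => ->; rewrite eqxx ?orbT.
have vr : v != r by apply: contraNneq vs' => ->; rewrite eqxx ?orbT.
set F3 := [set [set v; p; q]; [set v; p; r]; [set v; q; r]].
set N := [set f in boundary B | (x \in f) && (y \in f)].
set Nn := [set f in F3 | (x \in f) && (y \in f)].
have sub : [set f in boundary B' | (x \in f) && (y \in f)] \subset Nn :|: (N :\ s).
  apply/subsetP => f; rewrite inE => /andP[fB hxy]; move: fB; rewrite HB.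
  case/or4P => [/eqP Ef|/eqP Ef|/eqP Ef|/andP[fB fs]].
  1-3: by rewrite inE; apply/orP; left; rewrite inE hxy Ef /F3 !inE eqxx ?orbT.
  by rewrite in_setU in_setD1 fs /= orbC; apply/orP; left; rewrite /N in_set fB hxy.
apply: leq_trans (subset_leq_card sub) _; rewrite cardsU.
apply: leq_trans (leq_subr _ _) _.
have Nn2 : #|Nn| <= 2.
  have : Nn \proper F3.
    rewrite properE; apply/andP; split; first by apply/subsetP => f; rewrite inE => /andP[].
    apply/negP => /subsetP Hs.
    have h1 : [set v; p; q] \in Nn by apply: Hs; rewrite !inE eqxx ?orbT.
    have h2 : [set v; p; r] \in Nn by apply: Hs; rewrite !inE eqxx ?orbT.
    have h3 : [set v; q; r] \in Nn by apply: Hs; rewrite !inE eqxx ?orbT.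
    move: h1 h2 h3; rewrite !inE => /andP[_ /andP[hx1 hy1]] /andP[_ /andP[hx2 hy2]] /andP[_ /andP[hx3 hy3]].
    have xv : x = v.
      by apply/eqP; move: hx1 hx2 hx3; dec x.
    have yv : y = v.
      by apply/eqP; move: hy1 hy2 hy3; dec y.
    by move: xy; rewrite xv yv eqxx.
  move/proper_card => H1; rewrite -ltnS; apply: leq_trans H1 _.
  exact: card_set3_le.
have Nv : forall z, z \in [set x; y] -> z = v -> #|N :\ s| <= 0.
  move=> z hz zv; rewrite leqn0 cards_eq0; apply/eqP/setP => f; rewrite !inE.
  apply/negbTE; apply/negP => /andP[_ /andP[fB0 /andP[hx hy]]].
  have fB : f \in boundary B by rewrite /boundary inE.
  move: vB; rewrite -zv; move: hz; rewrite !inE => /orP[]/eqP->.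
  - by rewrite (bd_vert fB hx).
  - by rewrite (bd_vert fB hy).
case: (eqVneq x v) => [xv|xv].
  by rewrite -(addn0 2); apply: leq_add Nn2 (Nv x _ xv); rewrite !inE eqxx.
case: (eqVneq y v) => [yv|yv].
  by rewrite -(addn0 2); apply: leq_add Nn2 (Nv y _ yv); rewrite !inE eqxx ?orbT.
have N2 : #|N| <= 2 by exact: H.
case: (eqVneq Nn set0) => [->|/set0Pn[f0 f0N]].
  by rewrite cards0 add0n; apply: leq_trans N2; apply: subset_leq_card; exact: subD1set.
have sN : s \in N.
  move: f0N => /setIdP[hf /andP[hx hy]]; apply/setIdP; split => //.
  move: hf hx hy; rewrite /F3 Es !inE => /orP[/orP[]|]/eqP->; rewrite !inE; dec x; dec y.
have Nn1 : #|Nn| <= 1.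
  rewrite -(cards1 [set v; x; y]); apply: subset_leq_card; apply/subsetP => f.
  rewrite !inE => /andP[+ /andP[]].
  move=> /orP[/orP[]|]/eqP->; rewrite !inE => hx hy; apply/eqP/setP => u; rewrite !inE;
  move: hx hy; dec x; dec y; dec u.
have : #|N :\ s| <= 1 by move: N2; rewrite (cardsD1 s N) sN.
by move=> h; apply: leq_trans (leq_add Nn1 h) _.
Qed.

End Glue.

Lemma stacked_props B : stacked_ball B ->
  [/\ K5free (boundary B), C4free (boundary B), E2 (boundary B) & K4in B].
Proof.
elim=> [t ct|B0 s0 v0 _ [h1 h2 h3 h4] sB vB].
- by split; [exact: base_K5|exact: base_C4|exact: base_E2|exact: base_K4].
- split; [exact: glue_K5|exact: glue_C4|exact: glue_E2|exact: glue_K4].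
Qed.

Definition hollow S := exists Q, [/\ #|Q| = 4, clique S Q & forall t, t \in S -> ~~ (t \subset Q)].

Section Core.
Variables (Z Y : {set {set T}}) (a b c d : T).
Hypotheses (K5 : K5free Z) (E2Z : E2 Z) (C4Y : C4free Y).
Hypotheses (U : uniq [:: a; b; c; d]) (abc : [set a; b; c] \in Z) (abd : [set a; b; d] \in Z)
  (ncd : ~ is_edge Z [set c; d])
  (EY : Y = [set a; c; d] |: ([set b; c; d] |: ((Z :\ [set a; b; c]) :\ [set a; b; d]))).

Let dist : (a != b) && (a != c) && (a != d) && (b != c) && (b != d) && (c != d).
Proof.
move: U; rewrite /= !inE !negb_or => /andP[/andP[-> /andP[-> ->]] /andP[/andP[-> ->] /andP[-> _]]].
by [].
Qed.

Lemma memY t : (t \in Y) = [|| t == [set a; c; d], t == [set b; c; d] |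
   [&& t != [set a; b; d], t != [set a; b; c] & t \in Z]].
Proof. by rewrite EY !inE. Qed.

Lemma nadj_cd : ~ adj Z c d.
Proof.
case=> t tZ /andP[hc hd]; apply: ncd; exists t => //.
by apply/subsetP => u; rewrite !inE => /orP[]/eqP->.
Qed.

Lemma adjY_of u w : adj Z u w -> ~ (u = a /\ w = b) -> ~ (u = b /\ w = a) -> adj Y u w.
Proof.
case/andP: dist => /andP[/andP[/andP[/andP[ab ac] ad] bc] bd] cd.
move=> [t tZ /andP[hu hw]] n1 n2.
case: (boolP ((u \in [set a; c; d]) && (w \in [set a; c; d]))) => [h|h1].
  by exists [set a; c; d]; rewrite // memY eqxx.
case: (boolP ((u \in [set b; c; d]) && (w \in [set b; c; d]))) => [h|h2].
  by exists [set b; c; d]; rewrite // memY eqxx ?orbT.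
exists t; last by rewrite hu hw.
rewrite memY tZ !andbT; apply/orP; right; apply/orP; right.
apply/andP; split; apply/negP => /eqP Et; move: hu hw h1 h2; rewrite Et !inE;
dec u; dec w; try (by exfalso; apply: n1); try (by exfalso; apply: n2).
Qed.

Lemma adjY_inv u w : adj Y u w -> adj Z u w \/ (u \in [set c; d] /\ w \in [set c; d]).
Proof.
case/andP: dist => /andP[/andP[/andP[/andP[ab ac] ad] bc] bd] cd.
move=> [t]; rewrite memY => /or3P[/eqP->|/eqP->|/and3P[_ _ tZ]] /andP[hu hw];
  last by left; exists t => //; rewrite hu.
all: case: (boolP ((u \in [set a; b; c]) && (w \in [set a; b; c]))) => [h|h1];
  first by left; exists [set a; b; c].
all: case: (boolP ((u \in [set a; b; d]) && (w \in [set a; b; d]))) => [h|h2];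
  first by left; exists [set a; b; d].
all: right; move: hu hw h1 h2; rewrite !inE; dec u; dec w.
Qed.

Lemma core_hollow : hollow Z -> hollow Y.
Proof.
case/andP: dist => /andP[/andP[/andP[/andP[ab ac] ad] bc] bd] cd.
move=> [Q [cQ HQ hQ]].
case: (boolP ((a \in Q) && (b \in Q))) => [/andP[aQ bQ]|nab]; last first.
  exists Q; split => //.
  - move=> u w uQ wQ.
    apply: (@adjY_of u w (HQ u w uQ wQ)).
    + by case=> Eu Ew; move: nab; rewrite -Eu -Ew uQ wQ.
    + by case=> Eu Ew; move: nab; rewrite -Eu -Ew uQ wQ andbT.
  - move=> t; rewrite memY => /or3P[/eqP->|/eqP->|/and3P[_ _ tZ]]; last exact: hQ.
    + apply/negP => /subsetP h; apply: nadj_cd; apply: HQ; apply: h; rewrite !inE eqxx ?orbT //.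
    + apply/negP => /subsetP h; apply: nadj_cd; apply: HQ; apply: h; rewrite !inE eqxx ?orbT //.
have cQ' : c \notin Q.
  apply/negP => cQ1; have := hQ _ abc; move/negP; apply.
  by apply/subsetP => u; rewrite !inE => /orP[/orP[]|]/eqP->.
have dQ' : d \notin Q.
  apply/negP => dQ1; have := hQ _ abd; move/negP; apply.
  by apply/subsetP => u; rewrite !inE => /orP[/orP[]|]/eqP->.
have adjab : adj Z a b by exists [set a; b; c]; rewrite // !inE !eqxx ?orbT.
have adjca : adj Z c a by exists [set a; b; c]; rewrite // !inE !eqxx ?orbT.
have adjcb : adj Z c b by exists [set a; b; c]; rewrite // !inE !eqxx ?orbT.
have adjcc : adj Z c c by exists [set a; b; c]; rewrite // !inE !eqxx ?orbT.
case: (classic (exists x, [/\ x \in Q, x != a, x != b & ~ adj Z c x])); last first.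
  move=> H; exfalso; apply: (K5 (Q := c |: Q)).
    by rewrite cardsU1 cQ' cQ.
  have Hc : forall w, w \in Q -> adj Z c w.
    move=> w wQ; case: (eqVneq w a) => [->//|wa]; case: (eqVneq w b) => [->//|wb].
    by apply: NNPP => nw; apply: H; exists w.
  move=> u w; rewrite !inE => /orP[/eqP->|uQ] /orP[/eqP->|wQ] //.
  - exact: Hc.
  - exact: adj_sym (Hc u uQ).
  - exact: HQ.
case=> x [xQ xa xb nx].
have xc : x != c by apply: contraNneq cQ' => <-.
have xd : x != d by apply: contraNneq dQ' => <-.
exfalso; apply: (C4Y (w := a) (x := c) (y := b) (z := x)).
- by exists [set a; c; d]; rewrite ?memY ?eqxx // !inE !eqxx ?orbT.
- by exists [set b; c; d]; rewrite ?memY ?eqxx ?orbT // !inE !eqxx ?orbT.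
- apply: (@adjY_of b x (HQ b x bQ xQ)).
  + by case=> Eb; move: ab; rewrite Eb eqxx.
  + by case=> _ Ex; move: xa; rewrite Ex eqxx.
- apply: (@adjY_of x a (HQ x a xQ aQ)).
  + by case=> Ex; move: xa; rewrite Ex eqxx.
  + by case=> Ex; move: xb; rewrite Ex eqxx.
- case=> t; rewrite memY => /or3P[/eqP->|/eqP->|/and3P[t1 t2 tZ]].
  + by rewrite !inE; neqs; rewrite ?eqxx /= ?andbF.
  + by rewrite !inE; neqs; rewrite ?eqxx /= ?andbF.
  move=> /andP[ta tb].
  have := E2Z ab; apply/negP; rewrite -ltnNge.
  have -> : 3 = #|[set [set a; b; c]; [set a; b; d]; t]|.
    rewrite card_set3 // 1?eq_sym //.
    apply/negP => /eqP E.
    have : d \in [set a; b; c] by rewrite -E !inE eqxx ?orbT.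
    by rewrite !inE; neqs.
  apply: subset_leq_card; apply/subsetP => f; rewrite !inE => /orP[/orP[]|]/eqP->.
  + by rewrite abc !inE !eqxx ?orbT.
  + by rewrite abd !inE !eqxx ?orbT.
  + by rewrite tZ ta tb.
- case/adjY_inv => [//|[_]]; rewrite !inE; neqs; by [].
Qed.

End Core.

Section Map.
Variable f : {perm T}.
Definition mapS S := [set [set f x | x in t] | t : {set T} in S].
Let F := fun t : {set T} => [set f x | x in t].
Let Finj : injective F := imset_inj (@perm_inj _ f).
Let fi : injective f := @perm_inj _ f.

Lemma memF t (A : {set {set T}}) : (F t \in [set F u | u in A]) = (t \in A).
Proof. exact: mem_imset Finj. Qed.

Lemma subF t Q : (F t \subset F Q) = (t \subset Q).
Proof.
apply/idP/idP; last exact: imsetS.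
move/subsetP => h; apply/subsetP => x xt.
by have := h (f x) (imset_f _ xt); rewrite (mem_imset _ _ fi).
Qed.

Lemma cardF t : #|F t| = #|t|.
Proof. exact: card_imset. Qed.

Lemma Fsurj (u : {set T}) : u = F [set (f^-1)%g x | x in u].
Proof.
rewrite /F -imset_comp; apply/setP => x; apply/idP/imsetP.
- by move=> xu; exists x => //=; rewrite permKV.
- by case=> y yu ->; rewrite /= permKV.
Qed.

Lemma bd_map B : boundary (mapS B) = mapS (boundary B).
Proof.
apply/setP => u; rewrite [u]Fsurj; set w := [set _ | _ in u].
rewrite /mapS memF /boundary !inE cardF.
have -> : [set t in [set F t0 | t0 in B] | F w \subset t] = F @: [set t in B | w \subset t].
  apply/setP => t; rewrite [t]Fsurj memF !inE memF subF //.
by rewrite (card_imset _ Finj) -cardsE.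
Qed.

Lemma vert_map B : vertices (mapS B) = f @: vertices B.
Proof.
apply/setP => x; rewrite -[x](permKV f) (mem_imset _ _ fi).
apply/vertP/vertP.
- case=> t; rewrite [t]Fsurj /mapS memF => tB; rewrite (mem_imset _ _ fi).
  by exists [set (f^-1)%g x0 | x0 in t].
- case=> t tB xt; exists (F t); first by rewrite /mapS memF.
  by rewrite (mem_imset _ _ fi).
Qed.

Lemma stacked_map B : stacked_ball B -> stacked_ball (mapS B).
Proof.
elim=> [t ct|B0 s0 v0 _ IH sB vB].
- by rewrite /mapS imset_set1; apply: sb_base; rewrite cardF.
- rewrite /mapS !imsetU1 -/(mapS B0); apply: sb_glue => //.
  + by rewrite bd_map /mapS memF.
  + by rewrite vert_map (mem_imset _ _ fi).
Qed.

Lemma adj_map S x y : adj S x y -> adj (mapS S) (f x) (f y).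
Proof.
case=> t tS /andP[hx hy]; exists (F t); first by rewrite /mapS memF.
by rewrite !(mem_imset _ _ fi) hx hy.
Qed.

Lemma hollow_map S : hollow S -> hollow (mapS S).
Proof.
case=> Q [cQ HQ hQ]; exists (F Q); split; first by rewrite cardF.
- move=> u w /imsetP[u0 u0Q ->] /imsetP[w0 w0Q ->]; exact: adj_map (HQ _ _ u0Q w0Q).
- move=> t; rewrite [t]Fsurj /mapS memF subF; exact: hQ.
Qed.

End Map.

Lemma imsetK' (f : {perm T}) (t : {set T}) : [set (f^-1)%g x | x in [set f x | x in t]] = t.
Proof.
rewrite -imset_comp; apply/setP => x; apply/imsetP/idP.
- by case=> y yt ->; rewrite /= permK.
- by move=> xt; exists x => //=; rewrite permK.
Qed.

Lemma mapSK (f : {perm T}) S : mapS (f^-1)%g (mapS f S) = S.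
Proof.
rewrite /mapS -imset_comp; apply/setP => t; apply/imsetP/idP.
- by case=> y yt ->; rewrite /= imsetK'.
- by move=> xt; exists t => //=; rewrite imsetK'.
Qed.

End Gen.

Section Concrete.
Variable k : nat.
Hypothesis hk : 7 <= k.
Notation V := 'I_k.+1.
Definition o (i : nat) : V := inord i.

Lemma val_o i : i <= k -> nat_of_ord (o i) = i.
Proof. by move=> hi; rewrite /o inordK. Qed.

Lemma eq_o (x : V) i : i <= k -> (x == o i) = (nat_of_ord x == i).
Proof.
move=> hi; apply/eqP/eqP => [->|<-]; first by rewrite val_o.
by rewrite /o inord_val.
Qed.

Ltac oe := rewrite ?inE ?eq_o ?val_o //; try (by apply: leq_trans hk); try lia.

Ltac neqset := first [ by apply/eqP => /setP/(_ (o 0)); rewrite !inE; oe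
  | by apply/eqP => /setP/(_ (o 1)); rewrite !inE; oe
  | by apply/eqP => /setP/(_ (o 2)); rewrite !inE; oe
  | by apply/eqP => /setP/(_ (o 3)); rewrite !inE; oe ].

Lemma card_set4 (U : finType) (a b c d : U) : a != b -> a != c -> a != d ->
  b != c -> b != d -> c != d -> #|[set a; b; c; d]| = 4.
Proof.
move=> ab ac ad bc bd cd; rewrite -!setUA cardsU1 cardsU1 cards2 !inE.
by rewrite (negbTE ab) (negbTE ac) (negbTE ad) (negbTE bc) (negbTE bd) cd.
Qed.

Definition T0 := [set o 0; o 1; o 2; o 3].

Lemma card_T0 : #|T0| = 4.
Proof. by rewrite card_set4 //; oe. Qed.

Fixpoint fan (m : nat) : {set {set V}} :=
  if m is m'.+1 then (o (m' + 4) |: [set o 0; o 1; o (m' + 3)]) |: fan m'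
  else [set T0].

Lemma vert_T0 : vertices [set T0] = [set x : V | x <= 3].
Proof.
apply/setP => x; apply/vertP/idP.
- by case=> t /set1P -> ; rewrite !inE; oe.
- by rewrite inE => hx; exists T0; rewrite ?inE ?eqxx //; oe.
Qed.

Lemma fan_props m : m + 3 <= k ->
  [/\ stacked_ball (fan m), vertices (fan m) = [set x : V | x <= m + 3],
      [set o 0; o 1; o (m + 3)] \in boundary (fan m),
      [set o 0; o 2; o 3] \in boundary (fan m) &
      forall j, 4 <= j <= m + 3 -> [set o 0; o (j - 1); o j] \in boundary (fan m)].
Proof.
elim: m => [|m IH] hm.
- split.
  + apply: sb_base; exact: card_T0.
  + by rewrite vert_T0.
  + rewrite bd_base ?card_T0 // card_set3; oe.
    by apply/subsetP => x; rewrite !inE; oe.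
  + rewrite bd_base ?card_T0 // card_set3; oe.
    by apply/subsetP => x; rewrite !inE; oe.
  + move=> j; lia.
- have [sb vB s1 s2 s3] := IH (ltnW hm).
  have vn : o (m + 4) \notin vertices (fan m) by rewrite vB; oe.
  have HB := bd_glue s1 vn.
  split.
  + exact: sb_glue.
  + rewrite /= vert_glue vB; apply/setP => x; oe.
  + rewrite /= HB card_set3; oe.
    apply/orP; left; apply/andP; split; first lia.
    by apply/subsetP => x; rewrite !inE; oe.
  + rewrite /= HB s2 /=; apply/orP; right.
    apply/negP => /eqP E.
    have : o 1 \in [set o 0; o 2; o 3] by rewrite E !inE eqxx ?orbT.
    by oe.
  + move=> j hj; rewrite /= HB.
    case: (eqVneq j (m + 4)) => [->|jn].
      rewrite card_set3; oe; apply/orP; left; apply/andP; split; first lia.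
      by apply/subsetP => x; rewrite !inE; oe.
    rewrite s3; last by lia.
    apply/orP; right; apply/negP => /eqP E.
    have : o 1 \in [set o 0; o (j - 1); o j] by rewrite E !inE eqxx ?orbT.
    by oe.
Qed.

Lemma fan_mem m t : t \in fan m -> t = T0 \/ exists2 j, 4 <= j <= m + 3 & t = [set o 0; o 1; o (j - 1); o j].
Proof.
elim: m => [|m IH] /=; first by move/set1P; left.
case/setU1P => [->|/IH [->|[j hj ->]]]; [right|by left|right].
- exists (m + 4); first lia.
  by rewrite (_ : m + 4 - 1 = m + 3) 1?setUC //; lia.
- by exists j => //; lia.
Qed.

Lemma fan_not_hollow : ~ hollow (boundary (fan (k - 3))).
Proof.
have hm : k - 3 + 3 <= k by lia.
have [sb _ _ s2 s3] := fan_props hm.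
have [_ _ _ K4] := stacked_props sb.
case=> Q [cQ HQ hQ]; have := fan_mem (K4 Q cQ HQ).
case=> [EQ|[j hj EQ]].
- have := hQ _ s2; rewrite EQ => /negP; apply.
  by apply/subsetP => x; rewrite !inE; oe.
- have := hQ _ (s3 j hj); rewrite EQ => /negP; apply.
  by apply/subsetP => x; rewrite !inE; oe.
Qed.

Local Notation s1 := [set o 1; o 2; o 3].
Local Notation s2 := [set o 0; o 2; o 3].
Local Notation s3 := [set o 0; o 1; o 3].
Local Notation s4 := [set o 0; o 1; o 2].
Definition H1 := (o 4 |: s1) |: [set T0].
Definition H2 := (o 5 |: s2) |: H1.
Definition H3 := (o 6 |: s3) |: H2.
Definition H4 := (o 7 |: s4) |: H3.

Fixpoint hol (m : nat) : {set {set V}} :=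
  if m is m'.+1 then (o (m' + 8) |: [set o 0; o 1; o (m' + 7)]) |: hol m'
  else H4.

Lemma T0_face f : f \in boundary [set T0] -> f != s1 -> f != s2 -> f != s3 -> f != s4 -> False.
Proof.
rewrite bd_base ?card_T0 // => /andP[/eqP cf fT].
have [z zT Ef] := sub_del fT (etrans card_T0 (esym (congr1 S cf))).
move=> n1 n2 n3 n4.
move: zT; rewrite !inE => /orP[/orP[/orP[]|]|]/eqP Ez; subst z;
 [apply: (negP n1)|apply: (negP n2)|apply: (negP n3)|apply: (negP n4)];
 by rewrite Ef; apply/eqP/setP => x; rewrite !inE; oe.
Qed.

Lemma H4_props : [/\ stacked_ball H4, vertices H4 = [set x : V | x <= 7],
  [set o 0; o 1; o 7] \in boundary H4, clique (boundary H4) T0 &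
  forall t, t \in boundary H4 -> ~~ (t \subset T0)].
Proof.
have b0 : stacked_ball [set T0] by apply: sb_base; exact: card_T0.
have sub3 : forall a b c, a \in T0 -> b \in T0 -> c \in T0 -> [set a; b; c] \subset T0.
  by move=> a b c ha hb hc; apply/subsetP => x /setUP[/setUP[]|] /set1P ->.
have bs1 : s1 \in boundary [set T0].
  by rewrite bd_base card_set3 ?sub3; oe.
have v1 : o 4 \notin vertices [set T0] by rewrite vert_T0; oe.
have HB1 := bd_glue bs1 v1.
have b1 : stacked_ball H1 by apply: sb_glue.
have vH1 : vertices H1 = [set x : V | x <= 4].
  by rewrite /H1 vert_glue vert_T0; apply/setP => x; oe.
have bs2 : s2 \in boundary H1.
  rewrite /H1 HB1 bd_base ?card_T0 // card_set3 ?sub3 //; oe.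
  apply/orP; right; apply/eqP => /setP /(_ (o 0)); rewrite !inE; oe.
have v2 : o 5 \notin vertices H1 by rewrite vH1; oe.
have HB2 := bd_glue bs2 v2.
have b2 : stacked_ball H2 by apply: sb_glue.
have vH2 : vertices H2 = [set x : V | x <= 5].
  by rewrite /H2 vert_glue vH1; apply/setP => x; oe.
have bs3 : s3 \in boundary H2.
  rewrite /H2 HB2 /H1 HB1 bd_base ?card_T0 // card_set3 ?sub3 //; oe.
  apply/orP; right; apply/andP; split; last first.
    apply/eqP => /setP /(_ (o 1)); rewrite !inE; oe.
  apply/orP; right; apply/eqP => /setP /(_ (o 0)); rewrite !inE; oe.
have v3 : o 6 \notin vertices H2 by rewrite vH2; oe.
have HB3 := bd_glue bs3 v3.
have b3 : stacked_ball H3 by apply: sb_glue.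
have vH3 : vertices H3 = [set x : V | x <= 6].
  by rewrite /H3 vert_glue vH2; apply/setP => x; oe.
have bs4 : s4 \in boundary H3.
  rewrite /H3 HB3; apply/orP; right; apply/andP; split; last neqset.
  rewrite /H2 HB2; apply/orP; right; apply/andP; split; last neqset.
  rewrite /H1 HB1; apply/orP; right; apply/andP; split; last neqset.
  by rewrite bd_base card_set3 ?sub3; oe.
have v4 : o 7 \notin vertices H3 by rewrite vH3; oe.
have HB4 := bd_glue bs4 v4.
split.
- by apply: sb_glue.
- by rewrite /H4 vert_glue vH3; apply/setP => x; oe.
- rewrite /H4 HB4 card_set3; oe; apply/orP; left; apply/andP; split => //.
  by apply/subsetP => x; rewrite !inE; oe.
- have m1 := adj_mono bs1 v1; have m2 := adj_mono bs2 v2.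
  have m3 := adj_mono bs3 v3; have m4 := adj_mono bs4 v4.
  move=> u w hu hw.
  case: (boolP ((u \in o 4 |: s1) && (w \in o 4 |: s1))) => [/andP[h1 h2]|n1].
    by apply/m4/m3/m2; exact: adj_new.
  case: (boolP ((u \in o 5 |: s2) && (w \in o 5 |: s2))) => [/andP[h1 h2]|n2].
    by apply/m4/m3; exact: adj_new.
  case: (boolP ((u \in o 6 |: s3) && (w \in o 6 |: s3))) => [/andP[h1 h2]|n3].
    by apply/m4; exact: adj_new.
  exfalso; move: hu hw n1 n2 n3; rewrite !inE !eq_o; try (by apply: leq_trans hk).
  lia.
- move=> t; rewrite /H4 HB4 => /orP[/andP[/andP[_ vt] _]|/andP[+ n4]].
    by apply/negP => /subsetP /(_ _ vt); oe.
  rewrite /H3 HB3 => /orP[/andP[/andP[_ vt] _]|/andP[+ n3]].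
    by apply/negP => /subsetP /(_ _ vt); oe.
  rewrite /H2 HB2 => /orP[/andP[/andP[_ vt] _]|/andP[+ n2]].
    by apply/negP => /subsetP /(_ _ vt); oe.
  rewrite /H1 HB1 => /orP[/andP[/andP[_ vt] _]|/andP[tb n1]].
    by apply/negP => /subsetP /(_ _ vt); oe.
  by exfalso; exact: T0_face tb n1 n2 n3 n4.
Qed.

Lemma hol_props m : m + 7 <= k ->
  [/\ stacked_ball (hol m), vertices (hol m) = [set x : V | x <= m + 7],
  [set o 0; o 1; o (m + 7)] \in boundary (hol m), clique (boundary (hol m)) T0 &
  forall t, t \in boundary (hol m) -> ~~ (t \subset T0)].
Proof.
elim: m => [|m IH] hm; first exact: H4_props.
have [sb vB s1' cl nf] := IH (ltnW hm).
have vn : o (m + 8) \notin vertices (hol m) by rewrite vB; oe.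
have HB := bd_glue s1' vn.
split.
- exact: sb_glue.
- by rewrite /= vert_glue vB; apply/setP => x; oe.
- rewrite /= HB card_set3; oe.
  apply/orP; left; apply/andP; split; first lia.
  by apply/subsetP => x; rewrite !inE; oe.
- by move=> u w hu hw; apply: (adj_mono s1' vn); exact: cl.
- move=> t; rewrite /= HB => /orP[/andP[/andP[_ vt] _]|/andP[tb _]]; last exact: nf.
  by apply/negP => /subsetP /(_ _ vt); oe.
Qed.

Lemma hol_sphere : stacked_sphere (boundary (hol (k - 7))) /\ hollow (boundary (hol (k - 7))).
Proof.
have hm : k - 7 + 7 <= k by lia.
have [sb vB _ cl nf] := hol_props hm.
split.
- exists (hol (k - 7)) => //; split => //; rewrite vB.
  by apply/setP => x; rewrite !inE; have := ltn_ord x; lia.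
- by exists T0; split => //; exact: card_T0.
Qed.

Lemma fan_sphere : stacked_sphere (boundary (fan (k - 3))).
Proof.
have hm : k - 3 + 3 <= k by lia.
have [sb vB _ _ _] := fan_props hm.
exists (fan (k - 3)) => //; split => //; rewrite vB.
by apply/setP => x; rewrite !inE; have := ltn_ord x; lia.
Qed.

End Concrete.

Lemma sphere_map n (f : {perm 'I_n}) S : stacked_sphere S -> stacked_sphere (mapS f S).
Proof.
case=> B sB [vB ->]; exists (mapS f B); first exact: stacked_map.
split; last by rewrite bd_map.
rewrite vert_map vB; apply/setP => x; rewrite inE; apply/imsetP.
by exists ((f^-1)%g x); rewrite ?inE ?permKV.
Qed.

Lemma sphere_props n (S : {set {set 'I_n}}) : stacked_sphere S -> [/\ K5free S, C4free S & E2 S].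
Proof. by case=> B sB [_ ->]; have [h1 h2 h3 _] := stacked_props sB; split. Qed.

Lemma adj_hollow n (X Y : {set {set 'I_n}}) : Sn_adj X Y -> hollow X -> hollow Y.
Proof.
case=> stX stY [X1 [Y1 [[f E1] [g E2'] [a [b [c [d [U h1 h2 h3 h4]]]]]]]] hX.
have hX1 : hollow X1 by rewrite E1; exact: hollow_map.
have sX1 : stacked_sphere X1 by rewrite E1; exact: sphere_map.
have sY1 : stacked_sphere Y1 by rewrite E2'; exact: sphere_map.
have [K5 _ E2X] := sphere_props sX1.
have [_ C4 _] := sphere_props sY1.
have hY1 := core_hollow K5 E2X C4 U h1 h2 h3 h4 hX1.
rewrite -(mapSK g Y); apply: hollow_map.
by move: hY1; rewrite E2'.
Qed.

Lemma conn_hollow n (S S' : {set {set 'I_n}}) : Sn_connected S S' -> hollow S -> hollow S'.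
Proof.
elim=> [x y /adj_hollow //|x //|x y z _ IH1 _ IH2 h]; exact: IH2 (IH1 h).
Qed.

Theorem corollary4p6 (n : nat) : 8 <= n ->
  exists S S' : {set {set 'I_n}},
    [/\ stacked_sphere S, stacked_sphere S' & ~ Sn_connected S S'].
Proof.
case: n => [//|k] hk.
have hk' : 7 <= k by [].
have [sH hH] := hol_sphere hk'.
exists (boundary (hol k (k - 7))), (boundary (fan k (k - 3))).
split => //; first exact: fan_sphere.
move/conn_hollow => /(_ hH); exact: fan_not_hollow.
Qed.
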